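(* Let $F:(0,\infty)\times(0,\infty)\to\mathbb{R}$ satisfy Assumption (P) below, let $G$ be the function in (P)(ii), and let $f>0$. (i) Fix $\alpha>0$ and $\beta>0$. If $G(\beta)/\alpha<1/(1+f)$, then the system $$\frac{1-d^A}{1-d^B}=\frac{1}{\beta}G^{-1}\big(\alpha/(1+f)\big),\qquad F\big(\beta(1-d^A),1-d^B\big)=F(\beta,1)$$ admits a unique solution $(d^A,d^B)$ with $d^A\in(0,1)$ and $d^B<0$. If $G(\beta)/\alpha>1+f$, then the system $$\frac{1-d^A}{1-d^B}=\frac{1}{\beta}G^{-1}\big(\alpha(1+f)\big),\qquad F\big(\beta(1-d^A),1-d^B\big)=F(\beta,1)$$ admits a unique solution $(d^A,d^B)$ with $d^A<0$ and $d^B\in(0,1)$. Denote by $(\varphi^A(\alpha,\beta),\varphi^B(\alpha,\beta))$ the solution in these two cases, and set $(\varphi^A(\alpha,\beta),\varphi^B(\alpha,\beta))=(0,0)$ when $G(\beta)/\alpha\in[1/(1+f),1+f]$. Then for $i\in\{A,B\}$, $\varphi^i$ is continuous on $(0,\infty)\times(0,\infty)$ and equals $0$ on the region $\{G(\beta)/\alpha\in[1/(1+f),1+f]\}$; moreover, on the region $\{G(\beta)/\alpha\notin[1/(1+f),1+f]\}$, $\varphi^A(\alpha,\beta)$ is strictly increasing and $\varphi^B(\alpha,\beta)$ is strictly decreasing in each of $\alpha$ and $\beta$. (ii) For any $y^A>0$, $y^B>0$, $a>0$, $b>0$, the optimization problem $$\max_{D^A,D^B}\; a(1+f\mathbf 1_{D^A<0})D^A+b(1+f\mathbf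 1_{D^B<0})D^B$$ subject to $F(y^A,y^B)=F(y^A-D^A,y^B-D^B)$, $y^A-D^A>0$, $y^B-D^B>0$, admits a unique solution $(\hat D^A,\hat D^B)$, given by $\hat D^i=\varphi^i(a/b,\,y^A/y^B)\,y^i$ for $i\in\{A,B\}$.
   Context: Assumption (P) on the pricing function $F:(0,\infty)\times(0,\infty)\to\mathbb{R}$: (i) $F$ is continuously differentiable with partial derivatives $F_x(x,y)>0$ and $F_y(x,y)>0$ for all $x,y>0$; (ii) $F_x(x,y)/F_y(x,y)=G(x/y)$ for some continuously differentiable function $G:(0,\infty)\to(0,\infty)$ with $G'(z)<0$ for all $z>0$, $\lim_{z\downarrow0}G(z)=\infty$ and $\lim_{z\uparrow\infty}G(z)=0$; (iii) if $F(x,y)=F(x',y')$ then $F(cx,cy)=F(cx',cy')$ for every $c>0$. $G^{-1}$ denotes the inverse function of $G$. The constant $f>0$ is the unit trading fee; in the optimization problem, $y^A,y^B$ are the pool deposits of assets $A,B$, $D^i$ is the amount of asset $i$ withdrawn from the pool by the trader (negative means deposited), and $a,b$ are the trader's valuations of the assets. *)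

(* Defs.v *)
From Stdlib Require Import Reals ClassicalEpsilon.
From Coquelicot Require Import Coquelicot.
Open Scope R_scope.

(* Assumption (P) on the pricing function F, with G the function of (P)(ii).
   Only the values of F on (0,oo)^2 and of G on (0,oo) matter. *)
Definition AssumptionP (F : R -> R -> R) (G : R -> R) : Prop :=
  (exists Fx Fy : R -> R -> R,
     forall x y, 0 < x -> 0 < y ->
       is_derive (fun u => F u y) x (Fx x y) /\
       is_derive (fun v => F x v) y (Fy x y) /\
       continuous (fun p : R * R => Fx (fst p) (snd p)) (x, y) /\
       continuous (fun p : R * R => Fy (fst p) (snd p)) (x, y) /\
       0 < Fx x y /\ 0 < Fy x y /\
       Fx x y / Fy x y = G (x / y)) /\
  (exists G' : R -> R,
     forall z, 0 < z ->
       0 < G z /\ is_derive G z (G' z) /\ continuous G' z /\ G' z < 0) /\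
  filterlim G (at_right 0) (Rbar_locally p_infty) /\
  is_lim G p_infty 0 /\
  (forall x y x' y', 0 < x -> 0 < y -> 0 < x' -> 0 < y' ->
     F x y = F x' y' -> forall c, 0 < c -> F (c * x) (c * y) = F (c * x') (c * y')).

(* G^{-1} : the (unique, under (P)) z > 0 with G z = v. *)
Definition Ginv (G : R -> R) (v : R) : R :=
  epsilon (inhabits 1) (fun z => 0 < z /\ G z = v).

(* The system of (i) with ratio parameter v (v = alpha/(1+f) or alpha(1+f)). *)
Definition phi_system (F : R -> R -> R) (G : R -> R) (v beta dA dB : R) : Prop :=
  (1 - dA) / (1 - dB) = / beta * Ginv G v /\
  F (beta * (1 - dA)) (1 - dB) = F beta 1.

Definition sol_case1 F G (f alpha beta : R) (d : R * R) : Prop :=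
  phi_system F G (alpha / (1 + f)) beta (fst d) (snd d) /\
  0 < fst d < 1 /\ snd d < 0.

Definition sol_case2 F G (f alpha beta : R) (d : R * R) : Prop :=
  phi_system F G (alpha * (1 + f)) beta (fst d) (snd d) /\
  fst d < 0 /\ 0 < snd d < 1.

Definition phi (F : R -> R -> R) (G : R -> R) (f alpha beta : R) : R * R :=
  if Rlt_dec (G beta / alpha) (1 / (1 + f)) then
    epsilon (inhabits (0, 0)) (sol_case1 F G f alpha beta)
  else if Rlt_dec (1 + f) (G beta / alpha) then
    epsilon (inhabits (0, 0)) (sol_case2 F G f alpha beta)
  else (0, 0).

Definition phiA F G f alpha beta : R := fst (phi F G f alpha beta).
Definition phiB F G f alpha beta : R := snd (phi F G f alpha beta).

Definition outside_band (G : R -> R) (f alpha beta : R) : Prop :=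
  G beta / alpha < 1 / (1 + f) \/ 1 + f < G beta / alpha.

Definition indic_neg (x : R) : R := if Rlt_dec x 0 then 1 else 0.

Definition objective (f a b DA DB : R) : R :=
  a * (1 + f * indic_neg DA) * DA + b * (1 + f * indic_neg DB) * DB.

Definition feasible (F : R -> R -> R) (yA yB DA DB : R) : Prop :=
  F yA yB = F (yA - DA) (yB - DB) /\ 0 < yA - DA /\ 0 < yB - DB.

(* Main.v *)
Require Import Defs.
From Stdlib Require Import Reals ClassicalEpsilon Lra Psatz.
From Coquelicot Require Import Coquelicot.
Open Scope R_scope.

Lemma cont_of_derive (g : R -> R) x l : is_derive g x l -> continuity_pt g x.
Proof. intros H. apply continuity_pt_filterlim. apply (ex_derive_continuous g x). exists l; exact H. Qed.

Lemma incr_deriv (g dg : R -> R) a b : a < b ->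
  (forall t, a <= t <= b -> is_derive g t (dg t) /\ 0 < dg t) -> g a < g b.
Proof.
  intros Hab H.
  destruct (MVT_gen g a b dg) as [c [Hc He]].
  - intros x Hx. rewrite Rmin_left in Hx by lra. rewrite Rmax_right in Hx by lra.
    apply H; lra.
  - intros x Hx. rewrite Rmin_left in Hx by lra. rewrite Rmax_right in Hx by lra.
    apply (cont_of_derive g x (dg x)). apply H; lra.
  - rewrite Rmin_left in Hc by lra. rewrite Rmax_right in Hc by lra.
    assert (0 < dg c) by (apply H; lra).
    assert (0 < dg c * (b - a)) by (apply Rmult_lt_0_compat; lra). lra.
Qed.

Lemma ball_R a e y : ball a e y <-> Rabs (y - a) < e.
Proof. split; intro H; exact H. Qed.

Lemma minus_R (a b : R) : minus a b = a - b.
Proof. reflexivity. Qed.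

Definition Fincx (F : R -> R -> R) := forall x x' y, 0 < x -> x < x' -> 0 < y -> F x y < F x' y.
Definition Fincy (F : R -> R -> R) := forall x y y', 0 < x -> 0 < y -> y < y' -> F x y < F x y'.
Definition Fcont (F : R -> R -> R) := forall x y, 0 < x -> 0 < y ->
  continuous (fun p : R * R => F (fst p) (snd p)) (x, y).
Definition Gdec (G : R -> R) := forall z z', 0 < z -> z < z' -> G z' < G z.
Definition Ginv_ok (G : R -> R) := forall v, 0 < v -> 0 < Ginv G v /\ G (Ginv G v) = v.
Definition Fhom (F : R -> R -> R) := forall x y x' y', 0 < x -> 0 < y -> 0 < x' -> 0 < y' ->
     F x y = F x' y' -> forall c, 0 < c -> F (c * x) (c * y) = F (c * x') (c * y').
Definition Fdiff (F G : R -> R -> R) := True.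

Lemma derive_facts F G : AssumptionP F G ->
  Fincx F /\ Fincy F /\ Fcont F /\ Gdec G /\ Fhom F /\
  (forall z, 0 < z -> 0 < G z /\ continuity_pt G z).
Proof.
  intros [[Fx [Fy HF]] [[G' HG] [Hl0 [Hlinf Hhom]]]].
  split; [|split; [|split; [|split; [|split]]]].
  - intros x x' y Hx Hxx Hy.
    apply (incr_deriv (fun u => F u y) (fun u => Fx u y) x x'); auto.
    intros t Ht. destruct (HF t y) as [A [B [C [D [E [E2 E3]]]]]]; try lra. auto.
  - intros x y y' Hx Hy Hyy.
    apply (incr_deriv (fun u => F x u) (fun u => Fy x u) y y'); auto.
    intros t Ht. destruct (HF x t) as [A [B [C [D [E [E2 E3]]]]]]; try lra. auto.
  - intros x y Hx Hy. destruct (HF x y Hx Hy) as [A [B [C [D [E [E2 E3]]]]]].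
    apply (@filterdiff_continuous R_AbsRing (prod_NormedModule R_AbsRing R_NormedModule R_NormedModule) R_NormedModule (fun p : R * R => F (fst p) (snd p)) (x, y)).
    eexists. apply (is_derive_filterdiff F x y Fx (Fy x y)); auto.
    assert (Hl : locally (x, y) (fun p : R * R => 0 < fst p /\ 0 < snd p)).
    { exists (mkposreal (Rmin x y) (Rmin_pos x y Hx Hy)). intros [u v] Hb. unfold ball in Hb; simpl in Hb; unfold prod_ball in Hb; destruct Hb as [Hu Hv].
      apply ball_R in Hu. apply ball_R in Hv. simpl in *.
      pose proof (Rmin_l x y). pose proof (Rmin_r x y).
      apply Rabs_lt_between in Hu. apply Rabs_lt_between in Hv. simpl. rewrite !minus_R in *. split; lra. }
    eapply filter_imp; [|exact Hl]. intros [u v] [Hu Hv]. simpl.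
    destruct (HF u v Hu Hv) as [A' _]. exact A'.
  - intros z z' Hz Hzz.
    assert (- G z < - G z'); [|lra].
    apply (incr_deriv (fun u => - G u) (fun u => - G' u) z z'); auto.
    intros t Ht. destruct (HG t) as [A [B [C D]]]; try lra. split; [|lra].
    apply (is_derive_opp G t (G' t)). exact B.
  - exact Hhom.
  - intros z Hz. destruct (HG z Hz) as [A [B _]]. split; [exact A|]. apply (cont_of_derive G z (G' z)); exact B.
Qed.
Lemma Gdec_weak G : Gdec G -> forall z z', 0 < z -> z <= z' -> G z' <= G z.
Proof. intros H z z' Hz Hzz. destruct (Req_dec z z'). subst; lra. left; apply H; lra. Qed.

Lemma Ginv_spec F G : AssumptionP F G -> Ginv_ok G.
Proof.
  intros HA. destruct (derive_facts F G HA) as [_ [_ [_ [HGd [_ HGc]]]]].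
  destruct HA as [_ [_ [Hl0 [Hlinf _]]]].
  intros v Hv.
  assert (H1 : exists z1, 0 < z1 /\ v < G z1).
  { assert (HP : Rbar_locally p_infty (fun y => v < y)) by (exists v; auto).
    specialize (Hl0 _ HP). destruct Hl0 as [eps Heps].
    exists (eps / 2). pose proof (cond_pos eps). split; [lra|].
    apply Heps; [|lra]. apply ball_R. rewrite Rminus_0_r. rewrite Rabs_pos_eq; lra. }
  assert (H2 : exists z2, 0 < z2 /\ G z2 < v).
  { apply is_lim_spec in Hlinf. specialize (Hlinf (mkposreal v Hv)).
    destruct Hlinf as [M HM]. exists (Rmax M 0 + 1).
    pose proof (Rmax_l M 0). pose proof (Rmax_r M 0). split; [lra|].
    specialize (HM (Rmax M 0 + 1)). simpl in HM.
    assert (HH : Rabs (G (Rmax M 0 + 1) - 0) < v) by (apply HM; lra).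
    apply Rabs_lt_between in HH. lra. }
  destruct H1 as [z1 [Hz1 Hv1]]. destruct H2 as [z2 [Hz2 Hv2]].
  assert (Hz12 : z1 < z2).
  { destruct (Rlt_le_dec z1 z2); auto. pose proof (Gdec_weak G HGd z2 z1 Hz2 r). lra. }
  destruct (Ranalysis5.IVT_interv (fun z => v - G z) z1 z2) as [z [Hz Hze]]; auto.
  - intros a Ha. apply continuity_pt_minus. apply continuity_pt_const. intros u w; auto.
    apply HGc; lra.
  - lra.
  - lra.
  - unfold Ginv. apply epsilon_spec. exists z. split; lra.
Qed.

Lemma Ginv_unique G : Gdec G -> Ginv_ok G -> forall v z, 0 < v -> 0 < z -> G z = v -> Ginv G v = z.
Proof.
  intros HGd HGi v z Hv Hz Hzv. destruct (HGi v Hv) as [A B].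
  destruct (Rtotal_order (Ginv G v) z) as [H|[H|H]]; auto.
  - pose proof (HGd _ _ A H). lra.
  - pose proof (HGd _ _ Hz H). lra.
Qed.

Lemma Ginv_dec G : Gdec G -> Ginv_ok G -> forall v v', 0 < v -> v < v' -> Ginv G v' < Ginv G v.
Proof.
  intros HGd HGi v v' Hv Hvv. destruct (HGi v Hv) as [A B]. destruct (HGi v') as [A' B']; [lra|].
  destruct (Rlt_le_dec (Ginv G v') (Ginv G v)); auto.
  pose proof (Gdec_weak G HGd _ _ A r). lra.
Qed.

Lemma Ginv_cont G : Gdec G -> Ginv_ok G -> (forall z, 0 < z -> 0 < G z) ->
  forall v0, 0 < v0 -> continuous (Ginv G) v0.
Proof.
  intros HGd HGi HGp v0 Hv0. apply filterlim_locally. intros eps.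
  destruct (HGi v0 Hv0) as [A B]. set (z0 := Ginv G v0) in *.
  set (e := Rmin eps (z0 / 2)).
  assert (He : 0 < e) by (apply Rmin_pos; [apply cond_pos|lra]).
  assert (He1 : e <= eps) by apply Rmin_l. assert (He2 : e <= z0/2) by apply Rmin_r.
  assert (Gm : v0 < G (z0 - e)) by (rewrite <- B; apply HGd; lra).
  assert (Gp : G (z0 + e) < v0) by (rewrite <- B; apply HGd; lra).
  assert (Hd : 0 < Rmin (G (z0 - e) - v0) (v0 - G (z0 + e))) by (apply Rmin_pos; lra).
  exists (mkposreal _ Hd). intros v Hv. apply ball_R in Hv. simpl in Hv.
  pose proof (Rmin_l (G (z0 - e) - v0) (v0 - G (z0 + e))).
  pose proof (Rmin_r (G (z0 - e) - v0) (v0 - G (z0 + e))).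
  apply Rabs_lt_between in Hv. change (minus v v0) with (v - v0) in Hv.
  assert (Hpos : 0 < G (z0 + e)) by (apply HGp; lra).
  destruct (HGi v) as [A' B']; [lra|].
  apply ball_R.
  assert (z0 - e < Ginv G v).
  { destruct (Rlt_le_dec (z0 - e) (Ginv G v)); auto.
    pose proof (Gdec_weak G HGd _ _ A' r). lra. }
  assert (Ginv G v < z0 + e).
  { destruct (Rlt_le_dec (Ginv G v) (z0 + e)); auto.
    pose proof (Gdec_weak G HGd (z0 + e) _ ltac:(lra) r). lra. }
  apply Rabs_lt_between. lra.
Qed.
Definition Cf (F : R -> R -> R) (r b : R) : R :=
  epsilon (inhabits 1) (fun c => 0 < c /\ F (c * r) c = F b 1).

Lemma Fx_weak F : Fincx F -> forall x x' y, 0 < x -> x <= x' -> 0 < y -> F x y <= F x' y.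
Proof. intros H x x' y Hx Hxx Hy. destruct (Req_dec x x'). subst; lra. left; apply H; lra. Qed.
Lemma Fy_weak F : Fincy F -> forall x y y', 0 < x -> 0 < y -> y <= y' -> F x y <= F x y'.
Proof. intros H x y y' Hx Hy Hyy. destruct (Req_dec y y'). subst; lra. left; apply H; lra. Qed.

Lemma F_both F : Fincx F -> Fincy F -> forall x y x' y', 0 < x -> 0 < y -> x <= x' -> y <= y' ->
  (x < x' \/ y < y') -> F x y < F x' y'.
Proof.
  intros Hx Hy x y x' y' H1 H2 H3 H4 [H5|H5].
  - apply Rlt_le_trans with (F x' y). apply Hx; lra. apply (Fy_weak F Hy); lra.
  - apply Rlt_le_trans with (F x y'). apply Hy; lra. apply (Fx_weak F Hx); lra.
Qed.

Lemma F_both_weak F : Fincx F -> Fincy F -> forall x y x' y', 0 < x -> 0 < y -> x <= x' -> y <= y' ->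
  F x y <= F x' y'.
Proof.
  intros Hx Hy x y x' y' H1 H2 H3 H4.
  apply Rle_trans with (F x' y). apply (Fx_weak F Hx); lra. apply (Fy_weak F Hy); lra.
Qed.

Lemma ray_incr F : Fincx F -> Fincy F -> forall r c c', 0 < r -> 0 < c -> c < c' ->
  F (c * r) c < F (c' * r) c'.
Proof. intros Hx Hy r c c' Hr Hc Hcc. apply F_both; auto; try nra. Qed.

Lemma C_uniq F : Fincx F -> Fincy F -> forall r c c', 0 < r -> 0 < c -> 0 < c' ->
  F (c * r) c = F (c' * r) c' -> c = c'.
Proof.
  intros Hx Hy r c c' Hr Hc Hc' He.
  destruct (Rtotal_order c c') as [H|[H|H]]; auto.
  - pose proof (ray_incr F Hx Hy r c c' Hr Hc H). lra.
  - pose proof (ray_incr F Hx Hy r c' c Hr Hc' H). lra.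
Qed.

Lemma ray_cont F : Fcont F -> forall r c, 0 < r -> 0 < c ->
  continuous (fun c => F (c * r) c) c.
Proof.
  intros HF r c Hr Hc.
  apply (continuous_comp_2 (fun c => c * r) (fun c => c) F).
  - apply (continuous_mult (fun c : R => c) (fun _ => r)). apply continuous_id. apply continuous_const.
  - apply continuous_id.
  - apply HF; nra.
Qed.

Lemma C_spec F : Fincx F -> Fincy F -> Fcont F -> forall r b, 0 < r -> 0 < b ->
  0 < Cf F r b /\ F (Cf F r b * r) (Cf F r b) = F b 1.
Proof.
  intros Hx Hy HF r b Hr Hb.
  unfold Cf. apply epsilon_spec.
  set (t := b / r). assert (Ht : t * r = b) by (unfold t; field; lra).
  assert (Htp : 0 < t) by (unfold t; apply Rdiv_lt_0_compat; lra).
  set (c1 := Rmin t 1 / 2). set (c2 := 2 * Rmax t 1).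
  pose proof (Rmin_l t 1). pose proof (Rmin_r t 1). pose proof (Rmax_l t 1). pose proof (Rmax_r t 1).
  assert (Hc1 : 0 < c1) by (unfold c1; pose proof (Rmin_pos t 1 Htp Rlt_0_1); lra).
  assert (Hc12 : c1 < c2) by (unfold c1, c2; lra).
  assert (E1 : F (c1 * r) c1 < F b 1).
  { assert (c1 <= t / 2) by (unfold c1; lra). assert (c1 <= 1/2) by (unfold c1; lra).
    apply F_both; auto; try nra. }
  assert (E2 : F b 1 < F (c2 * r) c2).
  { assert (2 * t <= c2) by (unfold c2; lra). assert (2 <= c2) by (unfold c2; lra).
    apply F_both; auto; try nra. }
  destruct (Ranalysis5.IVT_interv (fun c => F (c * r) c - F b 1) c1 c2) as [c [Hc Hce]]; auto.
  - intros a Ha. apply continuity_pt_minus. 2: apply continuity_pt_const; intros u w; auto.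
    apply continuity_pt_filterlim. apply (ray_cont F HF r a Hr). lra.
  - lra.
  - lra.
  - exists c. split; lra.
Qed.

Lemma C_eq F : Fincx F -> Fincy F -> Fcont F -> forall r b c, 0 < r -> 0 < b -> 0 < c ->
  F (c * r) c = F b 1 -> Cf F r b = c.
Proof.
  intros Hx Hy HF r b c Hr Hb Hc He. destruct (C_spec F Hx Hy HF r b Hr Hb) as [A B].
  apply (C_uniq F Hx Hy r); auto. congruence.
Qed.

Lemma C_diag F : Fincx F -> Fincy F -> Fcont F -> forall b, 0 < b -> Cf F b b = 1.
Proof. intros Hx Hy HF b Hb. apply C_eq; auto; try lra. rewrite Rmult_1_l. reflexivity. Qed.

Lemma C_lt F : Fincx F -> Fincy F -> Fcont F -> forall r b, 0 < r -> r < b ->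
  1 < Cf F r b /\ Cf F r b * r < b.
Proof.
  intros Hx Hy HF r b Hr Hrb. destruct (C_spec F Hx Hy HF r b Hr ltac:(lra)) as [A B].
  set (c := Cf F r b) in *.
  assert (H1 : 1 < c).
  { destruct (Rlt_le_dec 1 c); auto.
    assert (F (c * r) c < F b 1); [|lra].
    apply F_both; auto; try nra. }
  split; auto.
  destruct (Rlt_le_dec (c * r) b); auto.
  assert (F b 1 < F (c * r) c); [|lra].
  apply F_both; auto; lra.
Qed.

Lemma C_gt F : Fincx F -> Fincy F -> Fcont F -> forall r b, 0 < b -> b < r ->
  Cf F r b < 1 /\ b < Cf F r b * r.
Proof.
  intros Hx Hy HF r b Hb Hrb. destruct (C_spec F Hx Hy HF r b ltac:(lra) Hb) as [A B].
  set (c := Cf F r b) in *.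
  assert (H1 : c < 1).
  { destruct (Rlt_le_dec c 1); auto.
    assert (F b 1 < F (c * r) c); [|lra].
    apply F_both; auto; try nra. }
  split; auto.
  destruct (Rlt_le_dec b (c * r)); auto.
  assert (F (c * r) c < F b 1); [|lra].
  apply F_both; auto; nra.
Qed.

Lemma C_mono_r F : Fincx F -> Fincy F -> Fcont F -> forall r1 r2 b, 0 < r1 -> r1 < r2 -> 0 < b ->
  Cf F r2 b < Cf F r1 b /\ Cf F r1 b * r1 < Cf F r2 b * r2.
Proof.
  intros Hx Hy HF r1 r2 b H1 H12 Hb.
  destruct (C_spec F Hx Hy HF r1 b H1 Hb) as [A1 B1].
  destruct (C_spec F Hx Hy HF r2 b ltac:(lra) Hb) as [A2 B2].
  set (c1 := Cf F r1 b) in *. set (c2 := Cf F r2 b) in *.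
  assert (c2 < c1).
  { destruct (Rlt_le_dec c2 c1); auto.
    assert (F (c1 * r1) c1 < F (c2 * r2) c2); [|lra].
    apply F_both; auto; nra. }
  split; auto.
  destruct (Rlt_le_dec (c1 * r1) (c2 * r2)); auto.
  assert (F (c2 * r2) c2 < F (c1 * r1) c1); [|lra].
  apply F_both; auto; nra.
Qed.

Lemma C_mono_b F : Fincx F -> Fincy F -> Fcont F -> Fhom F -> forall r b1 b2, 0 < r -> 0 < b1 -> b1 < b2 ->
  Cf F r b1 < Cf F r b2 /\ Cf F r b2 / b2 < Cf F r b1 / b1.
Proof.
  intros Hx Hy HF Hh r b1 b2 Hr H1 H12.
  destruct (C_spec F Hx Hy HF r b1 Hr H1) as [A1 B1].
  destruct (C_spec F Hx Hy HF r b2 Hr ltac:(lra)) as [A2 B2].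
  set (c1 := Cf F r b1) in *. set (c2 := Cf F r b2) in *.
  split.
  - destruct (Rlt_le_dec c1 c2); auto.
    assert (F (c2 * r) c2 <= F (c1 * r) c1) by (apply F_both_weak; auto; nra).
    assert (F b1 1 < F b2 1) by (apply Hx; lra). lra.
  - set (l := b2 / b1). assert (Hl : l * b1 = b2) by (unfold l; field; lra).
    assert (Hl1 : 1 < l) by (unfold l; apply Rmult_lt_reg_r with b1; auto;
                             unfold Rdiv; rewrite Rmult_assoc, Rinv_l; lra).
    pose proof (Hh (c1 * r) c1 b1 1 ltac:(nra) A1 H1 Rlt_0_1 B1 l ltac:(lra)) as E.
    rewrite Hl, Rmult_1_r in E.
    assert (F b2 1 < F b2 l) by (apply Hy; lra).
    assert (c2 < l * c1).
    { destruct (Rlt_le_dec c2 (l * c1)); auto.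
      assert (0 < l * c1) by nra. assert (0 < l * c1 * r) by nra.
      assert (F ((l * c1) * r) (l * c1) <= F (c2 * r) c2) by (apply F_both_weak; auto; nra).
      match goal with H : F (l * c1 * r) _ <= _ |- _ => rewrite Rmult_assoc in H end. lra. }
    assert (c2 / b2 = c2 * / b2) by reflexivity.
    apply Rmult_lt_reg_r with b2; [lra|].
    replace (c2 / b2 * b2) with c2 by (field; lra).
    replace (c1 / b1 * b2) with (l * c1) by (rewrite <- Hl; field; lra). lra.
Qed.
Lemma loc_lt {T : UniformSpace} (g : T -> R) x : continuous g x -> g x < 0 -> locally x (fun p => g p < 0).
Proof.
  intros Hc Hg.
  assert (HP : locally (g x) (fun y : R => y < 0)).
  { exists (mkposreal (- g x) ltac:(lra)). intros y Hy. apply ball_R in Hy. simpl in Hy.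
    apply Rabs_lt_between in Hy. change (minus y (g x)) with (y - g x) in Hy. lra. }
  exact (Hc _ HP).
Qed.

Lemma loc_gt {T : UniformSpace} (g : T -> R) x : continuous g x -> 0 < g x -> locally x (fun p => 0 < g p).
Proof.
  intros Hc Hg.
  assert (HP : locally (g x) (fun y : R => 0 < y)).
  { exists (mkposreal (g x) Hg). intros y Hy. apply ball_R in Hy. simpl in Hy.
    apply Rabs_lt_between in Hy. change (minus y (g x)) with (y - g x) in Hy. lra. }
  exact (Hc _ HP).
Qed.

Lemma loc_quad a b : 0 < a -> 0 < b -> locally (a, b) (fun p : R * R => 0 < fst p /\ 0 < snd p).
Proof.
  intros Ha Hb. apply filter_and.
  - apply (loc_gt fst (a, b)); auto. apply continuous_fst.
  - apply (loc_gt snd (a, b)); auto. apply continuous_snd.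
Qed.

Lemma C_cont F : Fincx F -> Fincy F -> Fcont F -> forall r0 b0, 0 < r0 -> 0 < b0 ->
  continuous (fun p : R * R => Cf F (fst p) (snd p)) (r0, b0).
Proof.
  intros Hx Hy HF r0 b0 Hr Hb. apply filterlim_locally. intros eps.
  destruct (C_spec F Hx Hy HF r0 b0 Hr Hb) as [A B]. simpl fst; simpl snd.
  set (c0 := Cf F r0 b0) in *.
  set (e := Rmin eps (c0 / 2)).
  assert (He : 0 < e) by (apply Rmin_pos; [apply cond_pos|lra]).
  assert (He1 : e <= eps) by apply Rmin_l. assert (He2 : e <= c0/2) by apply Rmin_r.
  set (cm := c0 - e). set (cp := c0 + e).
  assert (Hcm : 0 < cm) by (unfold cm; lra).
  assert (Gm : continuous (fun p : R * R => F (cm * fst p) cm - F (snd p) 1) (r0, b0)).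
  { apply (continuous_minus (fun p : R * R => F (cm * fst p) cm) (fun p : R * R => F (snd p) 1)).
    - apply (continuous_comp_2 (fun p : R * R => cm * fst p) (fun _ => cm) F).
      + apply (continuous_mult (fun _ : R * R => cm) (fun p : R * R => fst p)).
        apply continuous_const. apply continuous_fst.
      + apply continuous_const.
      + simpl. apply HF; nra.
    - apply (continuous_comp_2 (fun p : R * R => snd p) (fun _ => 1) F).
      + apply continuous_snd.
      + apply continuous_const.
      + simpl. apply HF; lra. }
  assert (Gp : continuous (fun p : R * R => F (cp * fst p) cp - F (snd p) 1) (r0, b0)).
  { apply (continuous_minus (fun p : R * R => F (cp * fst p) cp) (fun p : R * R => F (snd p) 1)).
    - apply (continuous_comp_2 (fun p : R * R => cp * fst p) (fun _ => cp) F).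
      + apply (continuous_mult (fun _ : R * R => cp) (fun p : R * R => fst p)).
        apply continuous_const. apply continuous_fst.
      + apply continuous_const.
      + simpl. apply HF; unfold cp; nra.
    - apply (continuous_comp_2 (fun p : R * R => snd p) (fun _ => 1) F).
      + apply continuous_snd.
      + apply continuous_const.
      + simpl. apply HF; lra. }
  assert (Lm : locally (r0, b0) (fun p : R * R => F (cm * fst p) cm - F (snd p) 1 < 0)).
  { apply (loc_lt (fun p : R * R => F (cm * fst p) cm - F (snd p) 1)); auto. simpl.
    assert (F (cm * r0) cm < F (c0 * r0) c0).
    { apply (ray_incr F Hx Hy r0 cm c0); auto; unfold cm; lra. }
    lra. }
  assert (Lp : locally (r0, b0) (fun p : R * R => 0 < F (cp * fst p) cp - F (snd p) 1)).
  { apply (loc_gt (fun p : R * R => F (cp * fst p) cp - F (snd p) 1)); auto. simpl.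
    assert (F (c0 * r0) c0 < F (cp * r0) cp).
    { apply (ray_incr F Hx Hy r0 c0 cp); auto; unfold cp; lra. }
    lra. }
  generalize (filter_and _ _ Lm (filter_and _ _ Lp (loc_quad r0 b0 Hr Hb))).
  apply filter_imp. intros [r b] [H1 [H2 [H3 H4]]]. simpl in *.
  destruct (C_spec F Hx Hy HF r b H3 H4) as [A' B'].
  set (c := Cf F r b) in *.
  assert (cm < c).
  { destruct (Rlt_le_dec cm c); auto.
    assert (F (c * r) c <= F (cm * r) cm) by (apply F_both_weak; auto; nra).
    lra. }
  assert (c < cp).
  { destruct (Rlt_le_dec c cp); auto.
    assert (F (cp * r) cp <= F (c * r) c) by (apply F_both_weak; auto; unfold cp in *; nra).
    lra. }
  apply ball_R. apply Rabs_lt_between. unfold cm, cp in *. lra.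
Qed.
Lemma cR_plus {T : UniformSpace} (g h : T -> R) x : continuous g x -> continuous h x -> continuous (fun y => g y + h y) x.
Proof. apply (continuous_plus g h). Qed.
Lemma cR_minus {T : UniformSpace} (g h : T -> R) x : continuous g x -> continuous h x -> continuous (fun y => g y - h y) x.
Proof. apply (continuous_minus g h). Qed.
Lemma cR_mult {T : UniformSpace} (g h : T -> R) x : continuous g x -> continuous h x -> continuous (fun y => g y * h y) x.
Proof. apply (continuous_mult g h). Qed.
Lemma cR_abs {T : UniformSpace} (g : T -> R) x : continuous g x -> continuous (fun y => Rabs (g y)) x.
Proof. intros H. apply (continuous_comp g Rabs). exact H. apply continuous_Rabs. Qed.
Lemma cR_const {T : UniformSpace} (c : R) (x : T) : continuous (fun _ => c) x.
Proof. apply continuous_const. Qed.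
Lemma cR_inv {T : UniformSpace} (g : T -> R) x : continuous g x -> g x <> 0 -> continuous (fun y => / g y) x.
Proof.
  intros H Hn. apply (continuous_comp g Rinv). exact H.
  assert (Hl : Finite (g x) <> Finite 0) by congruence.
  exact (filterlim_Rbar_inv (Finite (g x)) Hl).
Qed.

Lemma Rmin_abs u v : Rmin u v = (u + v - Rabs (u - v)) * / 2.
Proof. unfold Rmin. destruct (Rle_dec u v); [rewrite Rabs_left1 | rewrite Rabs_right]; lra. Qed.
Lemma Rmax_abs u v : Rmax u v = (u + v + Rabs (u - v)) * / 2.
Proof. unfold Rmax. destruct (Rle_dec u v); [rewrite Rabs_left1 | rewrite Rabs_right]; lra. Qed.

Lemma cR_min {T : UniformSpace} (g h : T -> R) x : continuous g x -> continuous h x -> continuous (fun y => Rmin (g y) (h y)) x.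
Proof.
  intros Hg Hh. apply (continuous_ext (fun y => (g y + h y - Rabs (g y - h y)) * / 2)).
  intros; rewrite Rmin_abs; reflexivity.
  apply cR_mult; [|apply cR_const]. apply cR_minus. apply cR_plus; auto. apply cR_abs, cR_minus; auto.
Qed.
Lemma cR_max {T : UniformSpace} (g h : T -> R) x : continuous g x -> continuous h x -> continuous (fun y => Rmax (g y) (h y)) x.
Proof.
  intros Hg Hh. apply (continuous_ext (fun y => (g y + h y + Rabs (g y - h y)) * / 2)).
  intros; rewrite Rmax_abs; reflexivity.
  apply cR_mult; [|apply cR_const]. apply cR_plus. apply cR_plus; auto. apply cR_abs, cR_minus; auto.
Qed.

Definition rho G f a b := Rmin (Ginv G (a / (1 + f))) (Rmax (Ginv G (a * (1 + f))) b).
Definition PA F r b := 1 - Cf F r b * r / b.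
Definition PB F r b := 1 - Cf F r b.

Lemma rho_cont G f : Gdec G -> Ginv_ok G -> (forall z, 0 < z -> 0 < G z) -> 0 < f ->
  forall a b, 0 < a -> 0 < b -> continuous (fun p : R * R => rho G f (fst p) (snd p)) (a, b).
Proof.
  intros HGd HGi HGp Hf a b Ha Hb. unfold rho.
  apply cR_min.
  - apply (continuous_comp (fun p : R * R => fst p / (1 + f)) (Ginv G)).
    + apply cR_mult. apply continuous_fst. apply cR_const.
    + simpl. apply Ginv_cont; auto. apply Rdiv_lt_0_compat; lra.
  - apply cR_max; [|apply continuous_snd].
    apply (continuous_comp (fun p : R * R => fst p * (1 + f)) (Ginv G)).
    + apply cR_mult. apply continuous_fst. apply cR_const.
    + simpl. apply Ginv_cont; auto. nra.
Qed.

Lemma PA_cont F : Fincx F -> Fincy F -> Fcont F -> forall r b, 0 < r -> 0 < b ->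
  continuous (fun q : R * R => PA F (fst q) (snd q)) (r, b).
Proof.
  intros Hx Hy HF r b Hr Hb. unfold PA, Rdiv.
  apply cR_minus. apply cR_const.
  apply cR_mult. apply cR_mult. apply (C_cont F Hx Hy HF r b Hr Hb). apply continuous_fst.
  apply cR_inv. apply continuous_snd. simpl; lra.
Qed.

Lemma PB_cont F : Fincx F -> Fincy F -> Fcont F -> forall r b, 0 < r -> 0 < b ->
  continuous (fun q : R * R => PB F (fst q) (snd q)) (r, b).
Proof.
  intros Hx Hy HF r b Hr Hb. unfold PB.
  apply cR_minus. apply cR_const. apply (C_cont F Hx Hy HF r b Hr Hb).
Qed.
Lemma div_lt_iff X a k : 0 < a -> (X / a < k <-> X < k * a).
Proof.
  intros Ha. split; intro H.
  - replace X with (X / a * a) by (field; lra). apply Rmult_lt_compat_r; auto.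
  - apply Rmult_lt_reg_r with a; auto. replace (X / a * a) with X by (field; lra). exact H.
Qed.
Lemma lt_div_iff X a k : 0 < a -> (k < X / a <-> k * a < X).
Proof.
  intros Ha. split; intro H.
  - replace X with (X / a * a) by (field; lra). apply Rmult_lt_compat_r; auto.
  - apply Rmult_lt_reg_r with a; auto. replace (X / a * a) with X by (field; lra). exact H.
Qed.

Lemma rho_facts G f : Gdec G -> Ginv_ok G -> 0 < f -> forall a b, 0 < a -> 0 < b ->
  let U := Ginv G (a / (1 + f)) in let L := Ginv G (a * (1 + f)) in
  0 < L /\ L < U /\ G U = a / (1 + f) /\ G L = a * (1 + f) /\
  (G b / a < 1 / (1 + f) -> U < b /\ rho G f a b = U) /\
  (1 + f < G b / a -> b < L /\ rho G f a b = L) /\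
  (1 / (1 + f) <= G b / a <= 1 + f -> rho G f a b = b).
Proof.
  intros HGd HGi Hf a b Ha Hb U L.
  assert (Hv1 : 0 < a / (1 + f)) by (apply Rdiv_lt_0_compat; lra).
  assert (Hv2 : 0 < a * (1 + f)) by nra.
  assert (Hv12 : a / (1 + f) < a * (1 + f)).
  { apply div_lt_iff; [lra|]. nra. }
  destruct (HGi _ Hv1) as [U1 U2]. destruct (HGi _ Hv2) as [L1 L2].
  fold U in U1, U2. fold L in L1, L2.
  assert (HLU : L < U) by (apply Ginv_dec; auto).
  split; [auto|]. split; [auto|]. split; [auto|]. split; [auto|].
  split; [|split].
  - intros H. assert (HbU : U < b).
    { apply (div_lt_iff _ _ _ Ha) in H. replace (1 / (1 + f) * a) with (a / (1 + f)) in H by (field; lra).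
      destruct (Rlt_le_dec U b); auto. pose proof (Gdec_weak G HGd b U Hb r). lra. }
    split; auto. unfold rho. fold U L. rewrite Rmax_right by lra. rewrite Rmin_left by lra. reflexivity.
  - intros H. assert (HbL : b < L).
    { apply (lt_div_iff _ _ _ Ha) in H. rewrite Rmult_comm in H.
      destruct (Rlt_le_dec b L); auto. pose proof (Gdec_weak G HGd L b L1 r). lra. }
    split; auto. unfold rho. fold U L. rewrite Rmax_left by lra. rewrite Rmin_right by lra. reflexivity.
  - intros [H1 H2].
    assert (HbU : b <= U).
    { destruct (Rle_lt_dec b U); auto.
      assert (G b < G U) by (apply HGd; lra).
      assert (G b / a < 1 / (1 + f)); [|lra].
      apply (div_lt_iff _ _ _ Ha). replace (1 / (1 + f) * a) with (a / (1 + f)) by (field; lra). lra. }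
    assert (HbL : L <= b).
    { destruct (Rle_lt_dec L b); auto.
      assert (G L < G b) by (apply HGd; lra).
      assert (1 + f < G b / a); [|lra].
      apply (lt_div_iff _ _ _ Ha). rewrite Rmult_comm. lra. }
    unfold rho. fold U L. rewrite Rmax_right by lra. rewrite Rmin_right by lra. reflexivity.
Qed.

Lemma sys_ok F G : Fincx F -> Fincy F -> Fcont F -> Ginv_ok G -> forall v b, 0 < v -> 0 < b ->
  phi_system F G v b (PA F (Ginv G v) b) (PB F (Ginv G v) b).
Proof.
  intros Hx Hy HF HGi v b Hv Hb. destruct (HGi v Hv) as [A _].
  set (r := Ginv G v) in *. destruct (C_spec F Hx Hy HF r b A Hb) as [C1 C2].
  unfold phi_system, PA, PB. fold r. set (c := Cf F r b) in *. split.
  - field. split; lra.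
  - replace (b * (1 - (1 - c * r / b))) with (c * r) by (field; lra).
    replace (1 - (1 - c)) with c by ring. exact C2.
Qed.

Lemma sys_uniq F G : Fincx F -> Fincy F -> Fcont F -> Ginv_ok G -> forall v b dA dB, 0 < v -> 0 < b ->
  phi_system F G v b dA dB -> 0 < 1 - dB ->
  dA = PA F (Ginv G v) b /\ dB = PB F (Ginv G v) b.
Proof.
  intros Hx Hy HF HGi v b dA dB Hv Hb [H1 H2] HdB. destruct (HGi v Hv) as [A _].
  set (r := Ginv G v) in *.
  set (c := 1 - dB) in *.
  assert (E : 1 - dA = c * r / b).
  { replace (1 - dA) with ((1 - dA) / c * c) by (field; lra). rewrite H1. field. lra. }
  assert (E2 : b * (1 - dA) = c * r) by (rewrite E; field; lra).
  rewrite E2 in H2.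
  assert (Hc : Cf F r b = c) by (apply C_eq; auto).
  unfold PA, PB. rewrite Hc. split; [|unfold c; ring].
  replace dA with (1 - (1 - dA)) by ring. rewrite E. reflexivity.
Qed.

Lemma case1_sol F G f : Fincx F -> Fincy F -> Fcont F -> Gdec G -> Ginv_ok G -> 0 < f ->
  forall a b, 0 < a -> 0 < b -> G b / a < 1 / (1 + f) ->
  let U := Ginv G (a / (1 + f)) in
  sol_case1 F G f a b (PA F U b, PB F U b) /\
  (forall d', sol_case1 F G f a b d' -> d' = (PA F U b, PB F U b)) /\
  0 < PA F U b /\ PB F U b < 0.
Proof.
  intros Hx Hy HF HGd HGi Hf a b Ha Hb H U.
  destruct (rho_facts G f HGd HGi Hf a b Ha Hb) as [L0 [LU [GU [GL [C1 [C2 C3]]]]]].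
  destruct (C1 H) as [HUb _]. fold U in HUb, LU, GU.
  assert (Hv1 : 0 < a / (1 + f)) by (apply Rdiv_lt_0_compat; lra).
  destruct (C_lt F Hx Hy HF U b ltac:(lra) HUb) as [K1 K2].
  destruct (C_spec F Hx Hy HF U b ltac:(lra) Hb) as [K3 _].
  assert (Pp : 0 < PA F U b /\ PA F U b < 1).
  { unfold PA. set (q := Cf F U b * U / b). assert (q * b = Cf F U b * U) by (unfold q; field; lra).
    assert (0 < Cf F U b * U) by nra. split; nra. }
  assert (Pn : PB F U b < 0) by (unfold PB; lra).
  split; [|split; [|split; tauto]].
  - split; [apply sys_ok; auto|]. simpl. split; [tauto|auto].
  - intros [d1 d2] [Hs [Hd1 Hd2]]. simpl in *.
    destruct (sys_uniq F G Hx Hy HF HGi _ b d1 d2 Hv1 Hb Hs ltac:(lra)) as [E1 E2].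
    rewrite E1, E2. reflexivity.
Qed.

Lemma case2_sol F G f : Fincx F -> Fincy F -> Fcont F -> Gdec G -> Ginv_ok G -> 0 < f ->
  forall a b, 0 < a -> 0 < b -> 1 + f < G b / a ->
  let L := Ginv G (a * (1 + f)) in
  sol_case2 F G f a b (PA F L b, PB F L b) /\
  (forall d', sol_case2 F G f a b d' -> d' = (PA F L b, PB F L b)) /\
  PA F L b < 0 /\ 0 < PB F L b.
Proof.
  intros Hx Hy HF HGd HGi Hf a b Ha Hb H L.
  destruct (rho_facts G f HGd HGi Hf a b Ha Hb) as [L0 [LU [GU [GL [C1 [C2 C3]]]]]].
  destruct (C2 H) as [HbL _]. fold L in HbL, LU, GL, L0.
  assert (Hv2 : 0 < a * (1 + f)) by nra.
  destruct (C_gt F Hx Hy HF L b Hb HbL) as [K1 K2].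
  destruct (C_spec F Hx Hy HF L b ltac:(lra) Hb) as [K3 _].
  assert (Pp : PA F L b < 0).
  { unfold PA. set (q := Cf F L b * L / b). assert (q * b = Cf F L b * L) by (unfold q; field; lra).
    nra. }
  assert (Pn : 0 < PB F L b < 1) by (unfold PB; lra).
  split; [|split; [|split; tauto]].
  - split; [apply sys_ok; auto|]. simpl. split; [auto|tauto].
  - intros [d1 d2] [Hs [Hd1 Hd2]]. simpl in *.
    destruct (sys_uniq F G Hx Hy HF HGi _ b d1 d2 Hv2 Hb Hs ltac:(lra)) as [E1 E2].
    rewrite E1, E2. reflexivity.
Qed.

Lemma phi_formula F G f : Fincx F -> Fincy F -> Fcont F -> Gdec G -> Ginv_ok G -> 0 < f ->
  forall a b, 0 < a -> 0 < b ->
  phi F G f a b = (PA F (rho G f a b) b, PB F (rho G f a b) b).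
Proof.
  intros Hx Hy HF HGd HGi Hf a b Ha Hb.
  destruct (rho_facts G f HGd HGi Hf a b Ha Hb) as [L0 [LU [GU [GL [C1 [C2 C3]]]]]].
  unfold phi. destruct (Rlt_dec (G b / a) (1 / (1 + f))) as [H1|H1].
  - destruct (case1_sol F G f Hx Hy HF HGd HGi Hf a b Ha Hb H1) as [S [Un _]].
    destruct (C1 H1) as [_ ->]. apply Un. apply epsilon_spec. eexists; exact S.
  - destruct (Rlt_dec (1 + f) (G b / a)) as [H2|H2].
    + destruct (case2_sol F G f Hx Hy HF HGd HGi Hf a b Ha Hb H2) as [S [Un _]].
      destruct (C2 H2) as [_ ->]. apply Un. apply epsilon_spec. eexists; exact S.
    + rewrite C3 by lra. unfold PA, PB. rewrite C_diag by auto.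
      f_equal; field; lra.
Qed.
Lemma mvt_pos (g dg : R -> R) x y : x < y -> (forall t, x <= t <= y -> is_derive g t (dg t)) ->
  exists c, x <= c <= y /\ g y - g x = dg c * (y - x).
Proof.
  intros Hxy H. destruct (MVT_gen g x y dg) as [c [Hc He]].
  - intros t Ht. rewrite Rmin_left in Ht by lra. rewrite Rmax_right in Ht by lra. apply H; lra.
  - intros t Ht. rewrite Rmin_left in Ht by lra. rewrite Rmax_right in Ht by lra.
    apply (cont_of_derive g t (dg t)). apply H; lra.
  - rewrite Rmin_left in Hc by lra. rewrite Rmax_right in Hc by lra. exists c; auto.
Qed.

Lemma strict_max (g dg : R -> R) a b m : a < m < b ->
  (forall u, a < u < b -> is_derive g u (dg u)) ->
  (forall u, a < u < m -> 0 < dg u) -> (forall u, m < u < b -> dg u < 0) -> dg m = 0 ->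
  forall u, a < u < b -> u <> m -> g u < g m.
Proof.
  intros Hm Hd Hp Hn H0 u Hu Hum.
  destruct (Rlt_le_dec u m) as [Hlt|Hge].
  - set (md := (u + m) / 2).
    destruct (mvt_pos g dg u md) as [c [Hc E1]]; [unfold md; lra| intros t Ht; apply Hd; unfold md in *; lra|].
    destruct (mvt_pos g dg md m) as [c' [Hc' E2]]; [unfold md; lra| intros t Ht; apply Hd; unfold md in *; lra|].
    assert (0 < dg c) by (apply Hp; unfold md in *; lra).
    assert (0 <= dg c').
    { destruct (Req_dec c' m). subst; lra. left; apply Hp; unfold md in *; lra. }
    assert (0 < dg c * (md - u)) by (apply Rmult_lt_0_compat; unfold md; lra).
    assert (0 <= dg c' * (m - md)) by (apply Rmult_le_pos; unfold md; lra).
    lra.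
  - assert (Hgt : m < u) by lra. set (md := (u + m) / 2).
    destruct (mvt_pos g dg m md) as [c [Hc E1]]; [unfold md; lra| intros t Ht; apply Hd; unfold md in *; lra|].
    destruct (mvt_pos g dg md u) as [c' [Hc' E2]]; [unfold md; lra| intros t Ht; apply Hd; unfold md in *; lra|].
    assert (dg c <= 0).
    { destruct (Req_dec c m). subst; lra. left; apply Hn; unfold md in *; lra. }
    assert (dg c' < 0) by (apply Hn; unfold md in *; lra).
    assert (dg c * (md - m) <= 0) by (apply Rmult_le_0_r; unfold md; lra).
    assert (dg c' * (u - md) < 0) by (apply Rmult_neg_pos; unfold md; lra).
    lra.
Qed.

Lemma derive_diff F G : AssumptionP F G -> exists Fx Fy : R -> R -> R, forall x y, 0 < x -> 0 < y ->
  differentiable_pt_lim F x y (Fx x y) (Fy x y) /\ 0 < Fy x y /\ Fx x y / Fy x y = G (x / y).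
Proof.
  intros [[Fx [Fy HF]] _]. exists Fx, Fy. intros x y Hx Hy.
  destruct (HF x y Hx Hy) as [A [B [C [D [E [E2 E3]]]]]].
  split; [|split; auto].
  apply filterdiff_differentiable_pt_lim.
  eapply filterdiff_ext_lin.
  - apply (is_derive_filterdiff F x y Fx (Fy x y)); auto.
    assert (Hl : locally (x, y) (fun p : R * R => 0 < fst p /\ 0 < snd p)) by (apply loc_quad; auto).
    eapply filter_imp; [|exact Hl]. intros [u v] [Hu Hv]. simpl.
    destruct (HF u v Hu Hv) as [A' _]. exact A'.
  - intros [u v]. simpl. change (u * Fx x y + v * Fy x y = u * Fx x y + v * Fy x y). reflexivity.
Qed.
Lemma ratio_lt u yu xh yh : 0 < u -> u < xh -> yh < yu -> 0 < yh -> u / yu < xh / yh.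
Proof.
  intros Hu Hux Hy Hyh.
  set (ru := u / yu). set (rh := xh / yh).
  assert (ru * yu = u) by (unfold ru; field; lra).
  assert (rh * yh = xh) by (unfold rh; field; lra).
  assert (0 < rh) by (unfold rh; apply Rdiv_lt_0_compat; lra).
  destruct (Rlt_le_dec ru rh); auto. nra.
Qed.

Lemma line_max F G : AssumptionP F G -> Gdec G -> forall xh yh p q, 0 < xh -> 0 < yh -> 0 < p -> 0 < q ->
  G (xh / yh) = p / q ->
  forall u, 0 < u -> p * u < p * xh + q * yh -> u <> xh ->
  F u ((p * xh + q * yh - p * u) / q) < F xh yh.
Proof.
  intros HA HGd xh yh p q Hx Hy Hp Hq HG u Hu Hus Hne.
  destruct (derive_diff F G HA) as [Fx [Fy HD]].
  set (s := p * xh + q * yh) in *.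
  set (yu := fun u => (s - p * u) / q).
  set (dg := fun u => Fx u (yu u) * 1 + Fy u (yu u) * (- p / q)).
  assert (Hyu : forall u, p * u < s -> 0 < yu u) by (intros w Hw; unfold yu; apply Rdiv_lt_0_compat; lra).
  assert (Hyx : yu xh = yh) by (unfold yu, s; field; lra).
  assert (Hxs : xh < s / p) by (apply (lt_div_iff _ _ _ Hp); unfold s; nra).
  assert (Hus' : u < s / p) by (apply (lt_div_iff _ _ _ Hp); lra).
  assert (Hdom : forall w, 0 < w < s / p -> p * w < s).
  { intros w Hw. destruct Hw as [_ Hw]. apply (lt_div_iff _ _ _ Hp) in Hw. lra. }
  assert (Hsign : forall w, 0 < w < s / p -> dg w = Fy w (yu w) * (G (w / yu w) - G (xh / yh))).
  { intros w Hw. pose proof (Hyu w (Hdom w Hw)). destruct (HD w (yu w)) as [_ [K1 K2]]; try lra.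
    unfold dg. rewrite HG. rewrite <- K2. field. split; lra. }
  rewrite <- Hyx.
  refine (strict_max (fun w => F w (yu w)) dg 0 (s / p) xh _ _ _ _ _ u _ Hne).
  - split; auto.
  - intros w Hw. pose proof (Hyu w (Hdom w Hw)).
    apply is_derive_Reals. unfold dg.
    apply (derivable_pt_lim_comp_2d F (fun w => w) yu w).
    + destruct (HD w (yu w)) as [K _]; try lra. exact K.
    + apply derivable_pt_lim_id.
    + apply is_derive_Reals. unfold yu. auto_derive; [auto|field; lra].
  - intros w Hw. assert (Hw' : 0 < w < s / p) by lra. rewrite (Hsign w Hw').
    pose proof (Hyu w (Hdom w Hw')). destruct (HD w (yu w)) as [_ [K1 _]]; try lra.
    apply Rmult_lt_0_compat; auto.
    assert (yh < yu w) by (rewrite <- Hyx; unfold yu; apply Rmult_lt_compat_r; [apply Rinv_0_lt_compat; lra| nra]).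
    assert (w / yu w < xh / yh) by (apply ratio_lt; lra).
    assert (G (xh / yh) < G (w / yu w)); [|lra].
    apply HGd; auto. apply Rdiv_lt_0_compat; lra.
  - intros w Hw. assert (Hw' : 0 < w < s / p) by lra. rewrite (Hsign w Hw').
    pose proof (Hyu w (Hdom w Hw')). destruct (HD w (yu w)) as [_ [K1 _]]; try lra.
    assert (yu w < yh) by (rewrite <- Hyx; unfold yu; apply Rmult_lt_compat_r; [apply Rinv_0_lt_compat; lra| nra]).
    assert (xh / yh < w / yu w).
    { assert (yu w / w < yh / xh) by (apply ratio_lt; lra).
      assert (0 < yu w / w) by (apply Rdiv_lt_0_compat; lra).
      set (a1 := xh / yh) in *. set (a2 := w / yu w) in *.
      assert (a1 * (yh / xh) = 1) by (unfold a1; field; lra).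
      assert (a2 * (yu w / w) = 1) by (unfold a2; field; lra).
      assert (0 < a1) by (unfold a1; apply Rdiv_lt_0_compat; lra).
      assert (0 < a2) by (unfold a2; apply Rdiv_lt_0_compat; lra).
      nra. }
    assert (G (w / yu w) < G (xh / yh)) by (apply HGd; auto; apply Rdiv_lt_0_compat; lra).
    nra.
  - rewrite (Hsign xh) by lra. rewrite Hyx. ring.
  - lra.
Qed.

Lemma support F G : AssumptionP F G -> Fincx F -> Fincy F -> Gdec G ->
  forall xh yh x y p q, 0 < xh -> 0 < yh -> 0 < x -> 0 < y -> 0 < p -> 0 < q ->
  F x y = F xh yh -> (x <> xh \/ y <> yh) -> G (xh / yh) = p / q ->
  p * xh + q * yh < p * x + q * y.
Proof.
  intros HA Hx Hy HGd xh yh x y p q Hxh Hyh Hx0 Hy0 Hp Hq HF Hne HG.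
  set (s := p * xh + q * yh). set (w := p * x + q * y).
  destruct (Rlt_le_dec s w) as [Hl|Hle]; auto. exfalso.
  assert (Hw : 0 < w) by (unfold w; nra).
  set (t := s / w). assert (Ht : t * w = s) by (unfold t; field; lra).
  assert (Hs : 0 < s) by (unfold s; nra).
  assert (Ht1 : 1 <= t).
  { destruct (Rle_lt_dec 1 t); auto. nra. }
  assert (Hyt : t * y = (s - p * (t * x)) / q) by (field_simplify_eq; [|lra]; unfold w in Ht; nra).
  assert (Hle2 : F x y <= F (t * x) (t * y)) by (apply F_both_weak; auto; nra).
  destruct (Req_dec (t * x) xh) as [Hex|Hnex].
  - assert (Hey : t * y = yh).
    { rewrite Hyt, Hex. unfold s. field. lra. }
    destruct (Req_dec t 1) as [Et|Et].
    + rewrite Et in Hex, Hey. destruct Hne; lra.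
    + assert (F x y < F (t * x) (t * y)) by (apply F_both; auto; nra).
      rewrite Hex, Hey in H. lra.
  - assert (Hlt : F (t * x) ((s - p * (t * x)) / q) < F xh yh).
    { assert (0 < t * y) by nra. assert (0 < t * x) by nra.
      assert (0 < q * (t * y)) by nra.
      assert (q * ((s - p * (t * x)) / q) = s - p * (t * x)) by (field; lra).
      rewrite Hyt in H1.
      apply (line_max F G HA HGd xh yh p q); auto. fold s. lra. }
    rewrite <- Hyt in Hlt. lra.
Qed.
Lemma rho_pos G f : Ginv_ok G -> 0 < f -> forall a b, 0 < a -> 0 < b -> 0 < rho G f a b.
Proof.
  intros HGi Hf a b Ha Hb. unfold rho.
  assert (Hv1 : 0 < a / (1 + f)) by (apply Rdiv_lt_0_compat; lra).
  assert (Hv2 : 0 < a * (1 + f)) by nra.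
  destruct (HGi _ Hv1) as [U1 _]. destruct (HGi _ Hv2) as [L1 _].
  apply Rmin_pos; auto. pose proof (Rmax_r (Ginv G (a * (1 + f))) b). lra.
Qed.

Lemma div_lt_compat_inv X a1 a2 : 0 < X -> 0 < a1 -> a1 < a2 -> X / a2 < X / a1.
Proof.
  intros HX H1 H12. unfold Rdiv. apply Rmult_lt_compat_l; auto.
  apply Rinv_lt_contravar; nra.
Qed.

Lemma rho_mono_a G f : Gdec G -> Ginv_ok G -> (forall z, 0 < z -> 0 < G z) -> 0 < f ->
  forall a1 a2 b, 0 < a1 -> 0 < b -> a1 < a2 ->
  outside_band G f a1 b -> outside_band G f a2 b -> rho G f a2 b < rho G f a1 b.
Proof.
  intros HGd HGi HGp Hf a1 a2 b H1 Hb H12 O1 O2.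
  destruct (rho_facts G f HGd HGi Hf a1 b H1 Hb) as [L0 [LU [GU [GL [C1 [C2 C3]]]]]].
  destruct (rho_facts G f HGd HGi Hf a2 b ltac:(lra) Hb) as [L0' [LU' [GU' [GL' [C1' [C2' C3']]]]]].
  assert (Hq : G b / a2 < G b / a1) by (apply div_lt_compat_inv; auto).
  destruct O1 as [O1|O1].
  - destruct (C1 O1) as [_ ->]. destruct (C1' ltac:(lra)) as [_ ->].
    apply Ginv_dec; auto. apply Rdiv_lt_0_compat; lra.
    unfold Rdiv. apply Rmult_lt_compat_r; auto. apply Rinv_0_lt_compat; lra.
  - destruct (C2 O1) as [HbL ->]. destruct O2 as [O2|O2].
    + destruct (C1' O2) as [HUb ->]. lra.
    + destruct (C2' O2) as [_ ->]. apply Ginv_dec; auto; nra.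
Qed.

Lemma PA_PB_mono_r F : Fincx F -> Fincy F -> Fcont F -> forall r1 r2 b, 0 < r1 -> r1 < r2 -> 0 < b ->
  PA F r2 b < PA F r1 b /\ PB F r1 b < PB F r2 b.
Proof.
  intros Hx Hy HF r1 r2 b H1 H12 Hb.
  destruct (C_mono_r F Hx Hy HF r1 r2 b H1 H12 Hb) as [A B].
  unfold PA, PB. split; [|lra].
  assert (Cf F r1 b * r1 / b < Cf F r2 b * r2 / b); [|lra].
  unfold Rdiv. apply Rmult_lt_compat_r; auto. apply Rinv_0_lt_compat; lra.
Qed.

Lemma PA_PB_mono_b F : Fincx F -> Fincy F -> Fcont F -> Fhom F -> forall r b1 b2, 0 < r -> 0 < b1 -> b1 < b2 ->
  PA F r b1 < PA F r b2 /\ PB F r b2 < PB F r b1.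
Proof.
  intros Hx Hy HF Hh r b1 b2 Hr H1 H12.
  destruct (C_mono_b F Hx Hy HF Hh r b1 b2 Hr H1 H12) as [A B].
  unfold PA, PB. split; [|lra].
  assert (Cf F r b2 * r / b2 < Cf F r b1 * r / b1); [|lra].
  replace (Cf F r b2 * r / b2) with (Cf F r b2 / b2 * r) by (field; lra).
  replace (Cf F r b1 * r / b1) with (Cf F r b1 / b1 * r) by (field; lra).
  apply Rmult_lt_compat_r; auto.
Qed.

Lemma obj_b1 f a b DA DB : 0 <= f -> 0 < a -> 0 < b -> objective f a b DA DB <= a * DA + b * (1 + f) * DB.
Proof.
  intros Hf Ha Hb. unfold objective, indic_neg.
  assert (0 <= a * f) by nra. assert (0 <= b * f) by nra.
  destruct (Rlt_dec DA 0); destruct (Rlt_dec DB 0); nra.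
Qed.
Lemma obj_b2 f a b DA DB : 0 <= f -> 0 < a -> 0 < b -> objective f a b DA DB <= a * (1 + f) * DA + b * DB.
Proof.
  intros Hf Ha Hb. unfold objective, indic_neg.
  assert (0 <= a * f) by nra. assert (0 <= b * f) by nra.
  destruct (Rlt_dec DA 0); destruct (Rlt_dec DB 0); nra.
Qed.
Lemma obj_e1 f a b DA DB : 0 < DA -> DB < 0 -> objective f a b DA DB = a * DA + b * (1 + f) * DB.
Proof.
  intros H1 H2. unfold objective, indic_neg.
  destruct (Rlt_dec DA 0); [lra|]. destruct (Rlt_dec DB 0); [|lra]. ring.
Qed.
Lemma obj_e2 f a b DA DB : DA < 0 -> 0 < DB -> objective f a b DA DB = a * (1 + f) * DA + b * DB.
Proof.
  intros H1 H2. unfold objective, indic_neg.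
  destruct (Rlt_dec DA 0); [|lra]. destruct (Rlt_dec DB 0); [lra|]. ring.
Qed.
Lemma obj_e0 f a b : objective f a b 0 0 = 0.
Proof. unfold objective, indic_neg. destruct (Rlt_dec 0 0); [lra|]. ring. Qed.
Lemma opt_strict F G f : AssumptionP F G -> 0 < f -> forall yA yB a b, 0 < yA -> 0 < yB -> 0 < a -> 0 < b ->
  forall DA DB, DA = phiA F G f (a / b) (yA / yB) * yA -> DB = phiB F G f (a / b) (yA / yB) * yB ->
  feasible F yA yB DA DB /\
  (forall EA EB, feasible F yA yB EA EB -> (EA <> DA \/ EB <> DB) ->
     objective f a b EA EB < objective f a b DA DB).
Proof.
  intros HA Hf yA yB a b HyA HyB Ha Hb DA DB HDA HDB.
  destruct (derive_facts F G HA) as [Hx [Hy [HF [HGd [Hh HGc]]]]].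
  pose proof (Ginv_spec F G HA) as HGi.
  assert (HGp : forall z, 0 < z -> 0 < G z) by (intros z Hz; apply HGc; auto).
  set (al := a / b) in *. set (be := yA / yB) in *.
  assert (Hal : 0 < al) by (unfold al; apply Rdiv_lt_0_compat; lra).
  assert (Hbe : 0 < be) by (unfold be; apply Rdiv_lt_0_compat; lra).
  assert (Hab : al * b = a) by (unfold al; field; lra).
  assert (Hyb : yB * be = yA) by (unfold be; field; lra).
  unfold phiA, phiB in HDA, HDB. rewrite (phi_formula F G f Hx Hy HF HGd HGi Hf al be Hal Hbe) in HDA, HDB.
  simpl in HDA, HDB.
  pose proof (rho_pos G f HGi Hf al be Hal Hbe) as Hrp.
  set (r := rho G f al be) in *.
  destruct (C_spec F Hx Hy HF r be Hrp Hbe) as [Hc Hce].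
  set (c := Cf F r be) in *.
  assert (EqA : yA - DA = yB * (c * r)).
  { rewrite HDA. unfold PA. fold c. rewrite <- Hyb. field. lra. }
  assert (EqB : yB - DB = yB * c).
  { rewrite HDB. unfold PB. fold c. ring. }
  assert (Hfe : F yA yB = F (yA - DA) (yB - DB)).
  { rewrite EqA, EqB. symmetry.
    pose proof (Hh (c * r) c be 1 ltac:(nra) Hc Hbe Rlt_0_1 Hce yB HyB) as E.
    rewrite E. rewrite Hyb, Rmult_1_r. reflexivity. }
  assert (Hxh : 0 < yB * (c * r)) by (apply Rmult_lt_0_compat; nra).
  assert (Hyh : 0 < yB * c) by nra.
  assert (Hrat : yB * (c * r) / (yB * c) = r) by (field; lra).
  split.
  { split; [exact Hfe|]. split; lra. }
  intros EA EB [HFE [HxE HyE]] Hne.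
  assert (HFQ : F (yA - EA) (yB - EB) = F (yB * (c * r)) (yB * c)).
  { rewrite <- EqA, <- EqB, <- Hfe. auto. }
  assert (Hne' : yA - EA <> yB * (c * r) \/ yB - EB <> yB * c).
  { rewrite <- EqA, <- EqB. destruct Hne; [left|right]; lra. }
  destruct (rho_facts G f HGd HGi Hf al be Hal Hbe) as [L0 [LU [GU [GL [C1 [C2 C3]]]]]].
  destruct (Rlt_dec (G be / al) (1 / (1 + f))) as [H1|H1].
  - destruct (C1 H1) as [_ Hr]. fold r in Hr.
    destruct (case1_sol F G f Hx Hy HF HGd HGi Hf al be Hal Hbe H1) as [_ [_ [S1 S2]]].
    rewrite <- Hr in S1, S2.
    assert (DAp : 0 < DA) by (rewrite HDA; nra).
    assert (DBn : DB < 0) by (rewrite HDB; nra).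
    rewrite (obj_e1 f a b DA DB DAp DBn).
    pose proof (obj_b1 f a b EA EB ltac:(lra) Ha Hb).
    assert (Hq : 0 < b * (1 + f)) by nra.
    pose proof (support F G HA Hx Hy HGd (yB * (c * r)) (yB * c) (yA - EA) (yB - EB) a (b * (1 + f)) Hxh Hyh ltac:(lra) ltac:(lra) Ha Hq HFQ Hne') as Hs.
    assert (HGe : G (yB * (c * r) / (yB * c)) = a / (b * (1 + f))).
    { rewrite Hrat, Hr, GU. rewrite <- Hab. field. split; lra. }
    specialize (Hs HGe). rewrite <- EqA, <- EqB in Hs.
    lra.
  - destruct (Rlt_dec (1 + f) (G be / al)) as [H2|H2].
    + destruct (C2 H2) as [_ Hr]. fold r in Hr.
      destruct (case2_sol F G f Hx Hy HF HGd HGi Hf al be Hal Hbe H2) as [_ [_ [S1 S2]]].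
      rewrite <- Hr in S1, S2.
      assert (DAp : DA < 0) by (rewrite HDA; nra).
      assert (DBn : 0 < DB) by (rewrite HDB; nra).
      rewrite (obj_e2 f a b DA DB DAp DBn).
      pose proof (obj_b2 f a b EA EB ltac:(lra) Ha Hb).
      assert (Hp : 0 < a * (1 + f)) by nra.
      pose proof (support F G HA Hx Hy HGd (yB * (c * r)) (yB * c) (yA - EA) (yB - EB) (a * (1 + f)) b Hxh Hyh ltac:(lra) ltac:(lra) Hp Hb HFQ Hne') as Hs.
      assert (HGe : G (yB * (c * r) / (yB * c)) = a * (1 + f) / b).
      { rewrite Hrat, Hr, GL. rewrite <- Hab. field. lra. }
      specialize (Hs HGe). rewrite <- EqA, <- EqB in Hs.
      lra.
    + assert (Hband : 1 / (1 + f) <= G be / al <= 1 + f) by lra.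
      pose proof (C3 Hband) as Hr. fold r in Hr.
      assert (Hc1 : c = 1) by (unfold c; rewrite Hr; apply C_diag; auto).
      assert (DA0 : DA = 0) by (rewrite HDA; unfold PA; fold c; rewrite Hc1, Hr; field; lra).
      assert (DB0 : DB = 0) by (rewrite HDB; unfold PB; fold c; rewrite Hc1; ring).
      rewrite DA0, DB0, obj_e0.
      set (g := G be). assert (Hg : 0 < g) by (apply HGp; auto).
      pose proof (support F G HA Hx Hy HGd (yB * (c * r)) (yB * c) (yA - EA) (yB - EB) g 1 Hxh Hyh ltac:(lra) ltac:(lra) Hg Rlt_0_1 HFQ Hne') as Hs.
      assert (HGe : G (yB * (c * r) / (yB * c)) = g / 1).
      { rewrite Hrat, Hr. unfold g. field. }
      specialize (Hs HGe). rewrite <- EqA, <- EqB in Hs. rewrite DA0, DB0 in Hs.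
      assert (HK : g * (yA - 0) + 1 * (yB - 0) < g * (yA - EA) + 1 * (yB - EB)) by exact Hs.
      assert (HK2 : g * EA + EB < 0) by nra.
      set (k := G be / al) in *. assert (Hk : k * al = g) by (unfold k, g; field; lra).
      assert (B1 : a <= g * b * (1 + f)).
      { destruct Hband as [Hb1 _].
        assert (1 <= k * (1 + f)).
        { apply Rmult_le_reg_r with (/ (1 + f)). apply Rinv_0_lt_compat; lra.
          replace (k * (1 + f) * / (1 + f)) with k by (field; lra). lra. }
        rewrite <- Hab, <- Hk. nra. }
      assert (B2 : g * b <= a * (1 + f)).
      { destruct Hband as [_ Hb2]. rewrite <- Hab, <- Hk. nra. }
      destruct (Rlt_le_dec 0 EA) as [EAp|EAn].
      * pose proof (obj_b1 f a b EA EB ltac:(lra) Ha Hb).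
        assert (a * EA <= g * b * (1 + f) * EA) by nra.
        assert (b * (1 + f) * (g * EA + EB) < 0) by (apply Rmult_pos_neg; nra).
        nra.
      * pose proof (obj_b2 f a b EA EB ltac:(lra) Ha Hb).
        assert (a * (1 + f) * EA <= g * b * EA) by nra.
        assert (b * (g * EA + EB) < 0) by nra.
        nra.
Qed.

Theorem proposition3p1 (F : R -> R -> R) (G : R -> R) (f : R) :
  AssumptionP F G -> 0 < f ->
  (* (i) existence and uniqueness of the two systems *)
  ((forall alpha beta, 0 < alpha -> 0 < beta ->
      G beta / alpha < 1 / (1 + f) ->
      exists d, sol_case1 F G f alpha beta d /\
        forall d', sol_case1 F G f alpha beta d' -> d' = d) /\
   (forall alpha beta, 0 < alpha -> 0 < beta ->
      1 + f < G beta / alpha ->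
      exists d, sol_case2 F G f alpha beta d /\
        forall d', sol_case2 F G f alpha beta d' -> d' = d) /\
   (* continuity on (0,oo)^2 *)
   (forall alpha beta, 0 < alpha -> 0 < beta ->
      continuous (fun p : R * R => phiA F G f (fst p) (snd p)) (alpha, beta) /\
      continuous (fun p : R * R => phiB F G f (fst p) (snd p)) (alpha, beta)) /\
   (* vanishing on the band *)
   (forall alpha beta, 0 < alpha -> 0 < beta ->
      1 / (1 + f) <= G beta / alpha <= 1 + f ->
      phiA F G f alpha beta = 0 /\ phiB F G f alpha beta = 0) /\
   (* strict monotonicity in alpha on the region outside the band *)
   (forall alpha1 alpha2 beta, 0 < alpha1 -> 0 < beta -> alpha1 < alpha2 ->
      outside_band G f alpha1 beta -> outside_band G f alpha2 beta ->
      phiA F G f alpha1 beta < phiA F G f alpha2 beta /\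
      phiB F G f alpha2 beta < phiB F G f alpha1 beta) /\
   (* strict monotonicity in beta on the region outside the band *)
   (forall alpha beta1 beta2, 0 < alpha -> 0 < beta1 -> beta1 < beta2 ->
      outside_band G f alpha beta1 -> outside_band G f alpha beta2 ->
      phiA F G f alpha beta1 < phiA F G f alpha beta2 /\
      phiB F G f alpha beta2 < phiB F G f alpha beta1)) /\
  (* (ii) the optimization problem has exactly one maximizer, given by phi *)
  (forall yA yB a b, 0 < yA -> 0 < yB -> 0 < a -> 0 < b ->
     forall DA DB,
       (feasible F yA yB DA DB /\
        forall EA EB, feasible F yA yB EA EB ->
          objective f a b EA EB <= objective f a b DA DB)
       <->
       (DA = phiA F G f (a / b) (yA / yB) * yA /\
        DB = phiB F G f (a / b) (yA / yB) * yB)).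
Proof.
  intros HA Hf.
  destruct (derive_facts F G HA) as [Hx [Hy [HF [HGd [Hh HGc]]]]].
  pose proof (Ginv_spec F G HA) as HGi.
  assert (HGp : forall z, 0 < z -> 0 < G z) by (intros z Hz; apply HGc; auto).
  split; [split; [|split; [|split; [|split; [|split]]]]|].
  - intros al be Hal Hbe H. destruct (case1_sol F G f Hx Hy HF HGd HGi Hf al be Hal Hbe H) as [S [Un _]].
    eexists; split; [exact S|exact Un].
  - intros al be Hal Hbe H. destruct (case2_sol F G f Hx Hy HF HGd HGi Hf al be Hal Hbe H) as [S [Un _]].
    eexists; split; [exact S|exact Un].
  - intros al be Hal Hbe.
    assert (Hr : 0 < rho G f al be) by (apply rho_pos; auto).
    assert (Loc : locally (al, be) (fun p : R * R => 0 < fst p /\ 0 < snd p)) by (apply loc_quad; auto).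
    split.
    + apply (continuous_ext_loc _ (fun p : R * R => PA F (rho G f (fst p) (snd p)) (snd p)) (al, be)).
      * eapply filter_imp; [|exact Loc]. intros [u v] [Hu Hv]. simpl.
        unfold phiA. rewrite phi_formula; auto.
      * apply (continuous_comp_2 (fun p : R * R => rho G f (fst p) (snd p)) snd (PA F) (al, be)).
        apply rho_cont; auto. apply continuous_snd. simpl. apply PA_cont; auto.
    + apply (continuous_ext_loc _ (fun p : R * R => PB F (rho G f (fst p) (snd p)) (snd p)) (al, be)).
      * eapply filter_imp; [|exact Loc]. intros [u v] [Hu Hv]. simpl.
        unfold phiB. rewrite phi_formula; auto.
      * apply (continuous_comp_2 (fun p : R * R => rho G f (fst p) (snd p)) snd (PB F) (al, be)).
        apply rho_cont; auto. apply continuous_snd. simpl. apply PB_cont; auto.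
  - intros al be Hal Hbe [H1 H2]. unfold phiA, phiB, phi.
    destruct (Rlt_dec (G be / al) (1 / (1 + f))); [lra|].
    destruct (Rlt_dec (1 + f) (G be / al)); [lra|]. simpl. split; reflexivity.
  - intros a1 a2 be H1 Hbe H12 O1 O2.
    unfold phiA, phiB. rewrite !phi_formula by (auto; lra). simpl.
    pose proof (rho_mono_a G f HGd HGi HGp Hf a1 a2 be H1 Hbe H12 O1 O2) as Hm.
    pose proof (rho_pos G f HGi Hf a2 be ltac:(lra) Hbe).
    destruct (PA_PB_mono_r F Hx Hy HF (rho G f a2 be) (rho G f a1 be) be) as [A B]; auto.
  - intros al b1 b2 Hal H1 H12 O1 O2.
    assert (Hb2 : 0 < b2) by lra.
    unfold phiA, phiB. rewrite !phi_formula by auto. simpl.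
    destruct (rho_facts G f HGd HGi Hf al b1 Hal H1) as [L0 [LU [GU [GL [C1 [C2 C3]]]]]].
    destruct (rho_facts G f HGd HGi Hf al b2 Hal Hb2) as [L0' [LU' [GU' [GL' [C1' [C2' C3']]]]]].
    assert (Hq : G b2 / al < G b1 / al).
    { unfold Rdiv. apply Rmult_lt_compat_r. apply Rinv_0_lt_compat; lra. apply HGd; auto. }
    destruct O1 as [O1|O1].
    + destruct (C1 O1) as [_ ->]. destruct (C1' ltac:(lra)) as [_ ->].
      apply PA_PB_mono_b; auto. lra.
    + destruct (C2 O1) as [_ ->]. destruct O2 as [O2|O2].
      * destruct (C1' O2) as [_ ->].
        destruct (case1_sol F G f Hx Hy HF HGd HGi Hf al b2 Hal Hb2 O2) as [_ [_ [S1 S2]]].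
        destruct (case2_sol F G f Hx Hy HF HGd HGi Hf al b1 Hal H1 O1) as [_ [_ [T1 T2]]].
        split; lra.
      * destruct (C2' O2) as [_ ->]. apply PA_PB_mono_b; auto.
  - intros yA yB a b HyA HyB Ha Hb DA DB.
    destruct (opt_strict F G f HA Hf yA yB a b HyA HyB Ha Hb _ _ eq_refl eq_refl) as [Feas Str].
    set (dA := phiA F G f (a / b) (yA / yB) * yA) in *.
    set (dB := phiB F G f (a / b) (yA / yB) * yB) in *.
    split.
    + intros [HFe Hmax].
      destruct (Req_dec DA dA) as [E1|E1]; destruct (Req_dec DB dB) as [E2|E2]; auto;
        exfalso; pose proof (Hmax dA dB Feas);
        [assert (objective f a b DA DB < objective f a b dA dB) by (apply Str; auto) ..]; lra.
    + intros [-> ->]. split; [exact Feas|].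
      intros EA EB HE.
      destruct (Req_dec EA dA) as [E1|E1]; destruct (Req_dec EB dB) as [E2|E2].
      * subst; lra.
      * left; apply Str; auto.
      * left; apply Str; auto.
      * left; apply Str; auto.
Qed.
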